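(* Let $F$ be a non-vanishing, proper subfunctor of the identity functor on the category of abelian groups. Then the essential image of $F$ contains either a non-trivial finite cyclic group or the $p$-quasicyclic group $\mathbb{Z}(p^\infty)$ for some prime $p$.
   Context: A subfunctor $F$ of the identity functor on abelian groups assigns to each abelian group $A$ a subgroup $F(A)\subseteq A$ with $f(F(A))\subseteq F(A')$ for every homomorphism $f:A\to A'$. Non-vanishing means $F(A)\neq 0$ for some $A$; proper means $F(A)\neq A$ for some $A$. $\mathbb{Z}(p^\infty)=\mathbb{Z}[1/p]/\mathbb{Z}$. The essential image of $F$ is the class of groups isomorphic to $F(A)$ for some $A$. *)

(* Defs.v *)
From HB Require Import structures.
From mathcomp Require Import all_boot all_order all_algebra.
Unset Printing Implicit Defensive.
Import Order.TTheory GRing.Theory Num.Theory.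
Local Open Scope ring_scope.

Record subfunctor := SubFunctor {
  sf_fun :> forall A : zmodType, A -> Prop;
  sf_0 : forall A : zmodType, sf_fun A 0;
  sf_sub : forall (A : zmodType) (x y : A),
      sf_fun A x -> sf_fun A y -> sf_fun A (x - y);
  sf_nat : forall (A B : zmodType) (f : {additive A -> B}) (x : A),
      sf_fun A x -> sf_fun B (f x)
}.

Definition non_vanishing (F : subfunctor) : Prop :=
  exists (A : zmodType) (x : A), F A x /\ x <> 0.

Definition proper_sf (F : subfunctor) : Prop :=
  exists (A : zmodType) (x : A), ~ F A x.

Definition iso_to_sub (G A : zmodType) (S : A -> Prop) : Prop :=
  exists f : {additive G -> A},
    injective f /\ forall y : A, S y <-> exists g : G, f g = y.

Definition in_ess_image (F : subfunctor) (G : zmodType) : Prop :=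
  exists A : zmodType, iso_to_sub G A (F A).

(* Z[1/p] as a subset of the rationals, and the integers inside it. *)
Definition in_Zinvp (p : nat) (q : rat) : Prop :=
  exists k : nat, (denq q %| (p ^ k)%:Z)%Z.
Definition in_Z (q : rat) : Prop := denq q = 1.

(* The subgroup S of A is isomorphic to Z(p^oo) = Z[1/p]/Z: there is a
   homomorphism phi : Z[1/p] -> A with kernel exactly Z and image exactly S
   (first isomorphism theorem). *)
Definition iso_to_sub_Zpinf (p : nat) (A : zmodType) (S : A -> Prop) : Prop :=
  exists phi : rat -> A,
    (forall x y, in_Zinvp p x -> in_Zinvp p y -> phi (x + y) = phi x + phi y) /\
    (forall x, in_Zinvp p x -> (phi x = 0 <-> in_Z x)) /\
    (forall y : A, S y <-> exists2 x, in_Zinvp p x & phi x = y).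

Definition Zpinf_in_ess_image (F : subfunctor) (p : nat) : Prop :=
  exists A : zmodType, iso_to_sub_Zpinf p A (F A).

(* Main.v *)
Require Import Defs.
From HB Require Import structures.
From mathcomp Require Import all_boot all_order all_algebra.
From mathcomp Require Import ring generic_quotient ring_quotient boolp classical_sets.
Import Order.TTheory GRing.Theory Num.Theory.
Local Open Scope ring_scope.
Local Open Scope quotient_scope.
Set Implicit Arguments. Unset Strict Implicit. Unset Printing Implicit Defensive.
Section Ext.
Variables (A D : zmodType).
Hypothesis divD : forall (d : D) (n : nat), (0 < n)%N -> exists t : D, t *+ n = d.
Variables (x : A) (y0 : D).
Hypothesis init : forall k : int, x *~ k = 0 -> y0 *~ k = 0.

Lemma oppP (a : A) (d : D) : - (a, d) = (- a, - d). Proof. by []. Qed.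
Lemma addP (a b : A) (c d : D) : (a, c) + (b, d) = (a + b, c + d). Proof. by []. Qed.
Lemma subP (a b : A) (c d : D) : (a, c) - (b, d) = (a - b, c - d). Proof. by []. Qed.

Definition Qg (G : set (A * D)) :=
  (forall d, G (0, d) -> d = 0) /\ (forall u v, G u -> G v -> G (u - v)).
Definition G0 : set (A * D) := fun u => exists k : int, u = (x *~ k, y0 *~ k).
Definition PP (G : set (A * D)) := Qg G /\ (G = set0 \/ (G0 `<=` G)%classic).

Lemma Qg_mul G a d : Qg G -> G (a, d) -> forall k : int, G (a *~ k, d *~ k).
Proof.
move=> [_ Gs] Gad.
have G00 : G (0, 0) by have := Gs _ _ Gad Gad; rewrite /= !subrr.
have GN u : G u -> G (- u) by move=> Gu; have := Gs _ _ G00 Gu; rewrite sub0r.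
have GD u v : G u -> G v -> G (u + v).
  by move=> Gu Gv; have := Gs _ _ Gu (GN _ Gv); rewrite opprK.
have Gn : forall n : nat, G (a *+ n, d *+ n).
  elim=> [|n IH] //; rewrite !mulrS; exact: (GD (a, d) (a *+ n, d *+ n)).
case=> n; first exact: Gn.
by rewrite !NegzE !mulrNz; apply: (GN (a *~ n.+1, d *~ n.+1)); apply: Gn.
Qed.

Lemma Qg_G0 : Qg G0.
Proof.
split.
  move=> d [k [xk ->]]; exact: init.
move=> _ _ [k ->] [l ->]; exists (k - l) => /=.
by rewrite !mulrzBr.
Qed.

Lemma PP_chain (F : set (set (A * D))) :
  (F `<=` PP)%classic -> total_on F subset -> PP (\bigcup_(X in F) X)%classic.
Proof.
move=> FP Ftot; split; first split.
- by move=> d [X FX Xd]; have [[H _] _] := FP X FX; exact: H.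
- move=> u v [X FX Xu] [Y FY Yv].
  have [XY|YX] := Ftot X Y FX FY.
    by exists Y => //; have [[_ H] _] := FP Y FY; apply: H => //; exact: XY.
  by exists X => //; have [[_ H] _] := FP X FX; apply: H => //; exact: YX.
- have [[u [X FX Xu]]|NE] := pselect (exists u, (\bigcup_(X in F) X)%classic u); last first.
    by left; apply/seteqP; split => // u Uu; apply: NE; exists u.
  right; have [_ [X0|H]] := FP X FX; first by rewrite X0 in Xu.
  by move=> v /H Xv; exists X.
Qed.

Lemma ext_exists : exists g : A -> D, zmod_morphism g /\ g x = y0.
Proof.
have [M [[QM M0] Mmax]] := Zorn_bigcup PP_chain.
have MG0 : (G0 `<=` M)%classic.
  case: M0 => [M0|//]; exfalso; apply: (Mmax G0).
  2: { split; first exact: Qg_G0. by right. }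
  rewrite M0; split; first by [].
  by move=> /(_ (0, 0)) H; apply: H; exists 0; rewrite !mulr0z.
have [Mfun Msub] := QM.
have M00 : M (0, 0) by apply: MG0; exists 0; rewrite !mulr0z.
have Mopp u : M u -> M (- u) by move=> Mu; have := Msub _ _ M00 Mu; rewrite sub0r.
have Mdef : forall a, exists d, M (a, d).
  move=> a; apply: contrapT => nda.
  have nM : forall d, ~ M (a, d) by move=> d Md; apply: nda; exists d.
  have [t Ht] : exists t : D, forall k : int, (exists d, M (a *~ k, d)) -> M (a *~ k, t *~ k).
    have [[n [n0 [dn Mn]]]|nopos] := pselect (exists n : nat, (0 < n)%N /\ exists d, M (a *+ n, d)).
      pose Pn := fun n : nat => `[< (0 < n)%N /\ exists d, M (a *+ n, d) >].
      have exPn : exists n, Pn n by exists n; apply/asboolP; split => //; exists dn.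
      case: (ex_minnP exPn) => m /asboolP [m0 [dm Mm]] mmin.
      have [t tm] := divD dm m0.
      exists t => k [d Md].
      have Mabs : exists d', M (a *+ `|k|%N, d').
        case: k Md => kk Md; first by exists d.
        exists (- d); have := Mopp _ Md; by rewrite oppP NegzE mulrNz opprK; apply.
      have mdiv : (m %| `|k|)%N.
        case: Mabs => d' Md'.
        have Mr : exists d'', M (a *+ (`|k| %% m)%N, d'').
          have Mq := Qg_mul QM Mm ((`|k| %/ m)%N%:Z).
          exists (d' - dm *~ (`|k| %/ m)%N); have := Msub _ _ Md' Mq.
          rewrite subP; congr M; congr (_, _).
          rewrite {1}(divn_eq `|k| m) mulrnDr [((`|k| %/ m) * m)%N]mulnC mulrnA.
          change ((a *+ m) *~ (`|k| %/ m)%N) with ((a *+ m) *+ (`|k| %/ m)%N).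
          by rewrite addrAC subrr add0r.
        rewrite /dvdn; apply/negPn/negP => r0.
        have : Pn (`|k| %% m)%N.
          by apply/asboolP; split => //; rewrite lt0n.
        by move=> /mmin; rewrite leqNgt ltn_mod m0.
      case/dvdnP: mdiv => j kj.
      have kE : k = (Posz m) * ((sgz k) * j%:Z).
        by rewrite {1}[k]intEsg kj PoszM [(j%:Z * _)]mulrC mulrCA.
      rewrite kE (mulrzA a) (mulrzA t).
      have := Qg_mul QM Mm ((sgz k) * j%:Z).
      by rewrite -tm !pmulrn.
    exists 0 => k [d Md].
    have k0 : k = 0.
      case: (eqVneq k 0) => // kn0; exfalso; apply: nopos; exists `|k|%N.
      split; first by rewrite absz_gt0.
      case: k Md kn0 => kk Md _; first by exists d.
      exists (- d); have := Mopp _ Md; by rewrite oppP NegzE mulrNz opprK; apply.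
    by rewrite k0 !mulr0z.
  pose M' : set (A * D) := fun u => exists m k, M m /\ u = m + (a *~ k, t *~ k).
  apply: (Mmax M'); last first.
    split; last by right => u /MG0 Mu; exists u, 0; rewrite !mulr0z addr0.
    split.
      move=> d [m [k [Mm e]]].
      have mE : m = (- (a *~ k), d - t *~ k).
        by rewrite -[m](addrK (a *~ k, t *~ k)) -e subP sub0r.
      have Mm' : M (a *~ k, - (d - t *~ k)).
        by have := Mopp _ Mm; rewrite mE oppP opprK.
      have Mk : exists d, M (a *~ k, d) by exists (- (d - t *~ k)).
      have := Msub _ _ (Ht k Mk) Mm'; rewrite subP subrr.
      by rewrite opprK addrC subrK => /Mfun.
    move=> _ _ [m1 [k1 [Mm1 ->]]] [m2 [k2 [Mm2 ->]]].
    exists (m1 - m2), (k1 - k2); split; first exact: Msub.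
    by rewrite !mulrzBr /= opprD addrACA.
  split; first by move=> u Mu; exists u, 0; rewrite !mulr0z addr0.
  move=> /(_ (a, t)) H; apply: (nM t); apply: H.
  by exists 0, 1; rewrite add0r !mulr1z.
pose g a := projT1 (cid (Mdef a)).
have Mg a : M (a, g a) by rewrite /g; case: cid.
exists g; split.
  move=> a b; have Mab : M (a - b, g a - g b) by have := Msub _ _ (Mg a) (Mg b); rewrite subP.
  have := Msub _ _ Mab (Mg (a - b)); rewrite subP subrr => /Mfun /eqP.
  by rewrite subr_eq0 => /eqP ->.
have Mx : M (x, y0) by apply: MG0; exists 1; rewrite !mulr1z.
have := Msub _ _ (Mg x) Mx; rewrite subP subrr => /Mfun /eqP.
by rewrite subr_eq0 => /eqP.
Qed.

End Ext.
Lemma denq_dvd (n d : int) : d != 0 -> (denq (n%:~R / d%:~R) %| d)%Z.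
Proof. by case: divqP => // k q _ _; rewrite dvdz_mull. Qed.

Definition Zloc (p : nat) : {pred rat} := fun q => coprime p `|denq q|.

Lemma Zloc_frac p (n d : int) : coprime p `|d| -> n%:~R / d%:~R \in Zloc p.
Proof.
move=> cpd; have [->|d0] := eqVneq d 0.
  by rewrite invr0 mulr0 unfold_in /Zloc /= coprimen1.
rewrite unfold_in /Zloc; apply: coprime_dvdr cpd.
by have := denq_dvd n d0.
Qed.

Lemma Zloc_int p (n : int) : n%:~R \in Zloc p.
Proof. by rewrite unfold_in /Zloc denq_int coprimen1. Qed.

Lemma Zloc_closed p : zmod_closed (Zloc p).
Proof.
split; first exact: (Zloc_int p 0).
move=> q1 q2; rewrite !unfold_in /Zloc => c1 c2.
have -> : q1 - q2 = (numq q1 * denq q2 - numq q2 * denq q1)%:~R / (denq q1 * denq q2)%:~R.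
  rewrite -{1}(divq_num_den q1) -{1}(divq_num_den q2) !intrM intrB !intrM.
  by field; rewrite !intr_eq0 !denq_neq0.
have := @Zloc_frac p (numq q1 * denq q2 - numq q2 * denq q1) (denq q1 * denq q2).
by rewrite abszM coprimeMr c1 c2 => /(_ isT).
Qed.

HB.instance Definition _ (p : nat) := GRing.isZmodClosed.Build rat (Zloc p) (Zloc_closed p).

Definition Dp (p : nat) := Quotient.quot (Zloc p).
Definition piD (p : nat) (q : rat) : Dp p := \pi_(Dp p) q.
Lemma piD_is_zmod p : zmod_morphism (piD p).
Proof. by move=> a b; rewrite /piD raddfB. Qed.
Lemma piD_eq0 p q : piD p q = 0 <-> q \in Zloc p.
Proof.
have E := Quotient.idealrBE (Zloc p) q 0.
rewrite subr0 in E.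
have -> : (q \in Zloc p) = (q == 0 %[mod Dp p]) by exact E.
rewrite /piD piE.
have -> : \pi_(Dp p) (0 : rat) = 0 by exact: raddf0.
by split => [->|/eqP].
Qed.

HB.instance Definition _ (p : nat) := GRing.isZmodMorphism.Build rat (Dp p) (piD p) (piD_is_zmod p).

Lemma piD_eqE p a b : piD p a = piD p b <-> a - b \in Zloc p.
Proof.
rewrite -piD_eq0 (piD_is_zmod p a b); split => E; first by rewrite E subrr.
by apply/eqP; rewrite -subr_eq0 E.
Qed.

Lemma piD_int p (k : int) : piD p k%:~R = 0.
Proof. by apply/piD_eq0; apply: Zloc_int. Qed.

Section Prime.
Variables (p : nat) (hp : prime p).

Definition rr (a : int) (f : nat) : rat := a%:~R / ((p ^ f)%N%:Z)%:~R.

Lemma pexp_neq0 f : ((p ^ f)%N%:Z)%:~R != 0 :> rat.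
Proof. by rewrite intr_eq0 -lt0n expn_gt0 prime_gt0. Qed.

Lemma in_Zinvp_rr a f : exists k : nat, (denq (rr a f) %| (p ^ k)%:Z)%Z.
Proof. by exists f; apply: denq_dvd; rewrite -lt0n expn_gt0 prime_gt0. Qed.

Lemma kerZinvp q : (exists k : nat, (denq q %| (p ^ k)%:Z)%Z) -> (q \in Zloc p <-> denq q = 1).
Proof.
move=> [k dk]; rewrite unfold_in /Zloc; split => [cp|->]; last by rewrite coprimen1.
have dk' : (`|denq q| %| p ^ k)%N by [].
have cp' : coprime `|denq q| (p ^ k) by rewrite coprime_sym coprimeXl.
have : gcdn `|denq q| (p ^ k) = `|denq q|%N by apply/gcdn_idPl.
by rewrite (eqP cp') => h; rewrite -absz_denq -h.
Qed.

Lemma rr_Zloc c j : rr c j \in Zloc p -> (p ^ j %| `|c|)%N.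
Proof.
rewrite unfold_in /Zloc => cp.
set q := rr c j.
have E : c * denq q = numq q * (p ^ j)%N%:Z.
  apply: (@intr_inj rat); rewrite !intrM numqE /q /rr.
  by field; rewrite pexp_neq0.
have : (p ^ j %| `|c| * `|denq q|)%N by rewrite -abszM E abszM dvdn_mull.
by rewrite Gauss_dvdl // coprimeXl.
Qed.

Lemma rr_mul a f g : rr a f = rr (a * (p ^ g)%N%:Z) (f + g).
Proof.
rewrite /rr expnD PoszM !intrM; field.
by rewrite !pnatr_eq0 -!lt0n !expn_gt0 prime_gt0.
Qed.

Lemma J_lemma a f : ~~ (p %| `|a|)%N -> exists u : int, piD p (rr a f) *~ u = piD p (rr 1 f).
Proof.
move=> pa; have cp : coprime `|a| (p ^ f) by rewrite coprime_sym coprimeXl // prime_coprime.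
have [u [v Euv]] := Bezoutz a (p ^ f)%N.
have g1 : gcdz a (p ^ f)%N = 1 by rewrite /gcdz /= (eqP cp).
rewrite g1 in Euv; exists u.
rewrite -raddfMz; apply/piD_eqE.
have -> : rr a f *~ u - rr 1 f = - v%:~R.
  have E' : u%:~R * a%:~R + v%:~R * ((p ^ f)%N%:Z)%:~R = 1 :> rat.
    by rewrite -!intrM -intrD Euv.
  rewrite /rr -mulrzr.
  have -> : ((1 : int)%:~R : rat) = u%:~R * a%:~R + v%:~R * ((p ^ f)%N%:Z)%:~R by rewrite E'.
  field; exact: pexp_neq0.
by rewrite rpredN Zloc_int.
Qed.

Lemma normal_form q : exists (a : int) (f : nat),
  piD p q = piD p (rr a f) /\ (f = 0%N \/ ~~ (p %| `|a|)%N).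
Proof.
set n := numq q; set d := `|denq q|%N.
have d0 : (0 < d)%N by rewrite absz_gt0 denq_neq0.
have [m cpm dE] := pfactor_coprime hp d0.
set f := logn p d in dE.
have cmP : coprime m (p ^ f) by rewrite coprime_sym coprimeXl.
have [u [v Euv]] := Bezoutz m (p ^ f)%N.
have g1 : gcdz m (p ^ f)%N = 1 by rewrite /gcdz /= (eqP cmP).
rewrite g1 in Euv.
exists (n * u), f; split.
  apply/piD_eqE.
  have -> : q - rr (n * u) f = (n * v)%:~R / (m%:Z)%:~R.
    have E' : u%:~R * (m%:Z)%:~R + v%:~R * ((p ^ f)%N%:Z)%:~R = 1 :> rat.
      by rewrite -!intrM -intrD Euv.
    have Ev : v%:~R = (- (u%:~R * (m%:Z)%:~R) + 1) / ((p ^ f)%N%:Z)%:~R :> rat.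
      by rewrite -(canRL (addKr _) E') mulfK // pexp_neq0.
    have Eq : q = n%:~R / ((m * p ^ f)%N%:Z)%:~R.
      by rewrite -dE /d absz_denq /n divq_num_den.
    rewrite {1}Eq /rr !intrM Ev PoszM intrM; field.
    apply/andP; split; last exact: pexp_neq0.
    rewrite pnatr_eq0; apply: contraTneq cpm => ->; rewrite /coprime gcdn0; apply/eqP => p1; move: hp; by rewrite p1.
  by apply: Zloc_frac.
have [->|fpos] := posnP f; first by left.
right; rewrite abszM Euclid_dvdM // negb_or; apply/andP; split.
  have cnd : coprime `|n| d by exact: coprime_num_den.
  have pd : (p %| d)%N by rewrite dE dvdn_mull // dvdn_exp.
  by rewrite -prime_coprime // coprime_sym (coprime_dvdr pd cnd).
apply/negP => pu.
have : (p%:Z %| u * m + v * (p ^ f)%N%:Z)%Z.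
  apply: rpredD; first exact: dvdz_mulr.
  by apply: dvdz_mull; rewrite dvdzE /= dvdn_exp.
by rewrite Euv dvdz1 /= => /eqP p1; move: hp; rewrite p1.
Qed.

End Prime.

Lemma mulrn_mod (V : zmodType) (e : V) (M m : nat) : e *+ M = 0 -> e *+ (m %% M) = e *+ m.
Proof.
move=> eM; rewrite {2}(divn_eq m M) mulrnDr mulnC mulrnA eM mul0rn add0r //.
Qed.

Lemma zp_hom (n : nat) (V : zmodType) (e : V) : e *+ n.+1 = 0 ->
  zmod_morphism (fun k : 'I_n.+1 => e *+ (val k)).
Proof.
move=> eM a b /=.
rewrite mulrn_mod // mulrnDr mulrn_mod // mulrnBr; last exact: ltnW (ltn_ord b).
by rewrite eM sub0r.
Qed.

Lemma Dp_div p (d : Dp p) (n : nat) : (0 < n)%N -> exists t : Dp p, t *+ n = d.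
Proof.
move=> n0; exists (piD p (repr d / n%:R)).
rewrite -raddfMn /= -(mulr_natr (repr d / n%:R)) divfK ?pnatr_eq0 -?lt0n //.
by rewrite /piD reprK.
Qed.

Section SF.
Variable F : subfunctor.
Variable A : zmodType.
Lemma sfN (x : A) : F A x -> F A (- x).
Proof. by move=> Fx; rewrite -sub0r; apply: sf_sub => //; apply: sf_0. Qed.
Lemma sfD (x y : A) : F A x -> F A y -> F A (x + y).
Proof. by move=> Fx Fy; rewrite -[y]opprK; apply: sf_sub => //; apply: sfN. Qed.
Lemma sfMn (x : A) n : F A x -> F A (x *+ n).
Proof. by move=> Fx; elim: n => [|n IH]; [rewrite mulr0n; apply: sf_0|rewrite mulrS; apply: sfD]. Qed.
Lemma sfMz (x : A) k : F A x -> F A (x *~ k).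
Proof. by move=> Fx; case: k => n; [apply: sfMn|rewrite NegzE mulrNz; apply/sfN/sfMn]. Qed.
End SF.

Lemma rr_mulz p a f (k : int) : rr p a f *~ k = rr p (a * k) f.
Proof. by rewrite /rr -mulrzr intrM mulrAC. Qed.

Lemma rr_int p a : rr p a 0 = a%:~R.
Proof. by rewrite /rr expn0 divr1. Qed.

Lemma rrB p a b f : rr p a f - rr p b f = rr p (a - b) f.
Proof. by rewrite /rr intrB mulrBl. Qed.

Lemma find_top (P : nat -> Prop) : P 1%N -> forall n, ~ P n.+2 ->
  exists j, (0 < j)%N /\ P j /\ ~ P j.+1.
Proof.
move=> P1; elim=> [|n IH] nP; first by exists 1%N.
have [Pn|nPn] := pselect (P n.+2); first by exists n.+2.
exact: IH.
Qed.

Lemma modz_mul (V : zmodType) (e : V) (N : nat) (c : int) :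
  e *+ N = 0 -> e *~ (c %% N)%Z = e *~ c.
Proof.
move=> eN; rewrite [in RHS](divz_eq c N) [in RHS]mulrzDr [in RHS]mulrzA [in RHS]mulrzAC -[in RHS]pmulrn eN mul0rz add0r //.
Qed.

Lemma eq_lt_dvd (N a b : nat) : (N %| `|a%:Z - b%:Z|)%N -> (a < N)%N -> (b < N)%N -> a = b.
Proof.
have key : forall a b : nat, (b <= a)%N -> (N %| (a - b))%N -> (a < N)%N -> a = b.
  move=> a' b' ba dv aN; apply/eqP; rewrite eqn_leq ba andbT -subn_eq0.
  apply/contraT; rewrite -lt0n => pos.
  by have := dvdn_leq pos dv; rewrite leqNgt (leq_ltn_trans (leq_subr _ _) aN).
move=> dv aN bN; case: (leqP b a) => h.
  by apply: key => //; move: dv; rewrite subzn.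
apply/esym; apply: key => //; first exact: ltnW.
by move: dv; rewrite -opprB subzn ?abszN //; exact: ltnW.
Qed.

Lemma x_absz (A : zmodType) (x : A) (k : int) : x *~ k = 0 -> x *+ `|k|%N = 0.
Proof.
by case: k => n //; rewrite NegzE mulrNz => /eqP; rewrite oppr_eq0 => /eqP.
Qed.

Lemma classify (F : subfunctor) p (hp : prime p) :
  F (Dp p) (piD p (rr p 1 1)) ->
  (exists n : nat, (1 < n)%N /\ in_ess_image F [the zmodType of 'Z_n]) \/
  (exists p : nat, prime p /\ Zpinf_in_ess_image F p).
Proof.
move=> F1; pose J f := F (Dp p) (piD p (rr p 1 f)).
have Jdown f : J f.+1 -> J f.
  rewrite /J (rr_mul hp 1 f 1) addn1 expn1 mul1r -(mul1r (Posz p)) -rr_mulz raddfMz.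
  exact: sfMz.
have Jle f g : (g <= f)%N -> J f -> J g.
  elim: f => [|f IH]; first by rewrite leqn0 => /eqP ->.
  rewrite leq_eqVlt => /orP [/eqP -> //|]; rewrite ltnS => gf Jf.
  exact: IH gf (Jdown _ Jf).
have Jnf a f : F (Dp p) (piD p (rr p a f)) -> ~~ (p %| `|a|)%N -> J f.
  move=> Fa pa; have [u E] := J_lemma hp f pa; rewrite /J -E; exact: sfMz.
have Selt (y : Dp p) : exists a f, y = piD p (rr p a f) /\ (f = 0%N \/ ~~ (p %| `|a|)%N).
  have [a [f [E H]]] := normal_form hp (repr y).
  by exists a, f; split => //; rewrite -E /piD reprK.
have [allJ|notall] := pselect (forall f, J f).
  right; exists p; split => //; exists (Dp p), (piD p); split; [|split].
  - by move=> a b _ _; exact: raddfD.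
  - move=> q qZ; have := kerZinvp qZ; have := piD_eq0 p q; rewrite /in_Z; tauto.
  - move=> y; split.
      move=> _; have [a [f [-> _]]] := Selt y; exists (rr p a f) => //.
      exact: (in_Zinvp_rr hp).
    move=> _; have [a [f [-> _]]] := Selt y.
    have -> : rr p a f = rr p 1 f *~ a by rewrite rr_mulz mul1r.
    by rewrite raddfMz; apply: sfMz; exact: allJ.
left.
have [j1 nJ] : exists j, ~ J j.
  apply: contrapT => H; apply: notall => f; apply: contrapT => nf; apply: H; by exists f.
have J1 : J 1%N by [].
have [j0 [j0pos [Jj0 nJj0]]] : exists j, (0 < j)%N /\ J j /\ ~ J j.+1.
  case: j1 nJ => [nJ|[nJ|n nJ]].
  - by exfalso; apply: nJ; apply: Jdown.
  - by [].
  - exact: find_top J1 n nJ.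
have Jmax f : J f -> (f <= j0)%N.
  move=> Jf; rewrite leqNgt; apply/negP => lt; apply: nJj0; exact: Jle lt Jf.
set N := (p ^ j0)%N.
have N1 : (1 < N)%N.
  by rewrite /N -(expn0 p) ltn_exp2l // prime_gt1.
set e := piD p (rr p 1 j0).
have eN : e *+ N = 0.
  rewrite /e -raddfMn pmulrn rr_mulz mul1r /=.
  have -> : rr p N j0 = (1 : int)%:~R by rewrite /rr divff // (pexp_neq0 hp).
  exact: piD_int.
have eM : e *+ (Zp_trunc N).+1.+1 = 0 by rewrite Zp_cast.
pose iota := fun k : 'Z_N => e *+ val k.
pose iotaA : {additive 'Z_N -> Dp p} :=
  HB.pack iota (GRing.isZmodMorphism.Build 'Z_N (Dp p) iota (zp_hom eM)).
have iotaE (k : 'Z_N) : iotaA k = piD p (rr p (val k) j0).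
  by rewrite /= /iota /e -raddfMn pmulrn rr_mulz mul1r.
exists N; split => //; exists (Dp p), iotaA; split.
  move=> a b; rewrite !iotaE => /piD_eqE; rewrite rrB => /(rr_Zloc hp) dv.
  apply: val_inj; apply: (eq_lt_dvd dv).
    by rewrite -[X in (_ < X)%N](Zp_cast N1) ltn_ord.
  by rewrite -[X in (_ < X)%N](Zp_cast N1) ltn_ord.
move=> y; split; last first.
  by move=> [k <-]; rewrite /= /iota; apply: sfMn.
move=> Sy; have [a [f [ye [f0|pa]]]] := Selt y.
  exists 0; rewrite /= /iota mulr0n ye f0 rr_int.
  by rewrite piD_int.
have Jf : J f by apply: (Jnf a f); rewrite -?ye.
have fj0 := Jmax f Jf.
set c := a * (p ^ (j0 - f))%N%:Z.
have yc : y = e *~ c.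
  by rewrite ye /e -raddfMz rr_mulz mul1r (rr_mul hp a f (j0 - f)) subnKC.
exists ((`|(c %% N)%Z|%N)%:R).
rewrite /= /iota (_ : \val _ = (`|(c %% N)%Z| %% N)%N); last exact: val_Zp_nat.
have N0 : (N%:Z != 0) by rewrite eqz_nat -lt0n ltnW.
by rewrite mulrn_mod // pmulrn abszE ger0_norm ?modz_ge0 // modz_mul // yc.
Qed.

Theorem theorem3p17 (F : subfunctor) :
  non_vanishing F -> proper_sf F ->
  (exists n : nat, (1 < n)%N /\ in_ess_image F [the zmodType of 'Z_n]) \/
  (exists p : nat, prime p /\ Zpinf_in_ess_image F p).
Proof.
move=> [A [x [Fx x0]]] _.
have [p [hp init]] : exists p, prime p /\
    forall k : int, x *~ k = 0 -> piD p (rr p 1 1) *~ k = 0.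
  have [[n [n0 xn]]|none] := pselect (exists n : nat, (0 < n)%N /\ x *+ n = 0).
    pose Pn := fun n : nat => `[< (0 < n)%N /\ x *+ n = 0 >].
    have exPn : exists n, Pn n by exists n; apply/asboolP.
    case: (ex_minnP exPn) => o /asboolP [o0 xo] omin.
    have o1 : (1 < o)%N.
      rewrite ltn_neqAle o0 andbT; apply/eqP => o1; apply: x0; by move: xo; rewrite -o1 mulr1n.
    exists (pdiv o); split; first exact: pdiv_prime.
    move=> k /x_absz xk.
    have odiv : (o %| `|k|)%N.
      rewrite /dvdn; apply/negPn/negP => r0.
      have : Pn (`|k| %% o)%N.
        apply/asboolP; split; first by rewrite lt0n.
        by rewrite (mulrn_mod _ xo).
      by move=> /omin; rewrite leqNgt ltn_mod o0.
    have pk : (pdiv o %| `|k|)%N := dvdn_trans (pdiv_dvd o) odiv.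
    have /dvdzP [q ->] : ((pdiv o)%:Z %| k)%Z by [].
    rewrite -raddfMz rr_mulz mul1r.
    have -> : rr (pdiv o) (q * (pdiv o)%:Z) 1 = q%:~R.
      rewrite /rr expn1 intrM mulfK // intr_eq0 -lt0n; exact: pdiv_gt0.
    exact: piD_int.
  exists 2%N; split => // k /x_absz xk.
  have -> : k = 0.
    apply/eqP; apply/contraT => kn0; exfalso; apply: none; exists `|k|%N.
    by rewrite absz_gt0.
  by rewrite mulr0z.
have [g [gM gx]] := ext_exists (@Dp_div p) init.
pose gA : {additive A -> Dp p} := HB.pack g (GRing.isZmodMorphism.Build A (Dp p) g gM).
have := @sf_nat F _ _ gA x Fx.
rewrite /= gx => F1.
exact: classify hp F1.
Qed.
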